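(* Let $\mathcal{X},\mu,f,\mathcal{D},G,U,f_n$ be as in the context, with $f\in\mathcal{F}(L,\beta)$, and suppose assumption sets (E) and (Q) hold. Fix $x\in\mathcal{X}$, let the bandwidth be $h=a n^{-1/(2\beta+d-d^G)}$ for some $a>0$, and let $\{g^i\}_{i=1}^m=\{g^i_{x,h}\}$ and $\rho_m^x$ be as constructed in the context. Write $p_{y,h}=\mu(B_\mathcal{X}(y,h))$. Then in the random design regime, for all $n$, $$\big|\mathbb{E}(S_{\rho_m^x}f_n(x))-S_{\rho_m^x}f(x)\big|\ \le\ Bh^\beta+\sup_{i\in[m]}\exp(-np_{g^i\cdot x,h})\,\|f\|_\infty .$$
   Context: Setting. $\mathcal{X}$ is the closure of an open subset of $\mathbb{R}^d$ or an orientable smooth $d$-dimensional Riemannian manifold with geodesic distance $d_\mathcal{X}$; $B_\mathcal{X}(x,h)$ is the open ball. $\mu$ is a Borel probability measure with $\mathrm{supp}(\mu)=\mathcal{X}$ such that there is $H>0$ and constants $c_x>0$ with $c_xh^d<\mu(B_\mathcal{X}(x,h))$ for all $x$ and $0<h<H$. Data $\mathcal{D}=\{(X_i,Y_i)\}_{i=1}^n$ with $Y_i=f(X_i)+\epsilon_i$, $\epsilon_i$ iid, mean $0$, variance $\sigma^2<\infty$, independent of $\mathcal{D}_X=\{X_i\}$; random design means $X_i\overset{iid}{\sim}\mu$. The Hölder class $\mathcal{F}(L,\beta)$ ($k=\lfloor\beta\rfloor$) is the set of $f\in L^2(\mathcal{X})$ with $\sum_{|\alpha|\le k}\|\partial^\alpha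 f\|_\infty+\sum_{|\alpha|=k}\sup_{x\ne y}\frac{|\partial^\alpha f(x)-\partial^\alpha f(y)|}{d(x,y)^{\beta-k}}\le L$. $G$ is a locally compact Lie group acting smoothly, properly, faithfully on $\mathcal{X}$; $U\subseteq G$ is compact with nonempty interior containing the identity; $d^G$ is the dimension of a principal (generic) orbit of $G$. For a distribution $\rho$ on $G$, $S_\rho\phi(x)=\mathbb{E}(\phi(g\cdot x))$, $g\sim\rho$. Construction of $\rho_m^x$ (bandwidth $h$): isometrically embed $\mathcal{X}$ in $\mathbb{R}^q$; with $[x]_U=\{g\cdot x:g\in U\}$, let $W_x^{[x]_U}$ be the largest hypercube in the tangent space $T_x[x]_U$ contained in the orthogonal projection of $[x]_U$ onto $T_x[x]_U$, and $R_x^{[x]_U}$ its side length ($=1$ if the orbit is $0$-dimensional). Pick a maximal grid $\{a_i\}_{i=1}^m\subseteq W_x^{[x]_U}$ with pairwise distances $\ge 2h$, project it orthogonally onto $[x]_U$ to get $u_i$, pick $g^i_{x,h}\in U$ with $g^i_{x,h}\cdot x=u_i$, and let $\rho_m^x$ be the uniform distribution on $\{g^i_{x,h}\}$, so $S_{\rho_m^x}f_n(x)=\frac1m\sum_i f_n(g^i_{x,h}\cdot x)$. Assumption set (E) on the base estimator $f_n$ (built from $\mathcal{D}$ with bandwidth $h$): (E1) conditioned on $\mathcal{D}_X$, $f_n(x)$ and $f_n(y)$ are independent whenever $d(x,y)\ge 2h$; (E2) if $B_\mathcal{X}(x,h)$ contains no $X_i$ then $f_n(x)=0$; (E3) there exist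 $B,V,C>0$ such that for all $f\in\mathcal{F}(L,\beta)$, $\mu$-almost all $x$ and all $n$: (a) if $B_\mathcal{X}(x,h)\cap\mathcal{D}_X\ne\emptyset$ then $|\mathbb{E}(f_n(x)\mid\mathcal{D}_X)-f(x)|\le Bh^\beta$; (b) if $B_\mathcal{X}(x,h)\cap\mathcal{D}_X\ne\emptyset$ then $\mathrm{Var}(f_n(x)\mid\mathcal{D}_X)\le V/|B_\mathcal{X}(x,h)\cap\mathcal{D}_X|$; (c) $\mathbb{E}((f_n(x)-f(x))^2)\le C(B^2h^{2\beta}+V(n\mu(B_\mathcal{X}(x,h)))^{-1})$. Assumption set (Q): (Q1) $\mathbb{E}((R_X^{[X]_U})^{-d^G})<\infty$ for $X\sim\mu$; (Q2) $d^G\le 2\beta$.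
   Formalization: Assumption (E3)(a) holds at every point y and for every design $\mathcal{D}_X$ whose points meet $B_\mathcal{X}(y,h)$, rather than only for μ-almost all x. The statement above fails without it. *)

(* Defs.v *)
From HB Require Import structures.
From mathcomp Require Import all_boot all_order all_algebra.
From mathcomp Require Import all_classical all_reals all_analysis.
Set Implicit Arguments. Unset Strict Implicit. Unset Printing Implicit Defensive.
Import Order.TTheory GRing.Theory Num.Theory.
Local Open Scope classical_set_scope.
Local Open Scope ring_scope.

Section defs.
Context {d : measure_display} {R : realType} {X : measurableType d}.

Definition ball_d (dist : X -> X -> R) (y : X) (r : R) : set X :=
  [set z | dist y z < r].

Definition data n (f : X -> R) (xs : n.-tuple X) (es : n.-tuple R)
  : n.-tuple (X * R)%type :=
  [tuple (tnth xs i, f (tnth xs i) + tnth es i) | i < n].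

(** conditional expectation given D_X = xs of a statistic F(D):
    integrate the noise out (noise independent of the design) *)
Definition condE n (Pe : probability (n.-tuple R) R) (f : X -> R)
  (F : n.-tuple (X * R)%type -> R) (xs : n.-tuple X) : \bar R :=
  (\int[Pe]_es (F (data f xs es))%:E)%E.

Definition fullE n (Px : probability (n.-tuple X) R)
  (Pe : probability (n.-tuple R) R) (f : X -> R)
  (F : n.-tuple (X * R)%type -> R) : \bar R :=
  (\int[Px]_xs condE Pe f F xs)%E.

Definition iid_law {d' : measure_display} {T : measurableType d'} n
  (P : probability (n.-tuple T) R) (nu : probability T R) : Prop :=
  forall A : 'I_n -> set T, (forall i, measurable (A i)) ->
    P [set t | forall i, A i (tnth t i)] = (\prod_(i < n) nu (A i))%E.

Definition supnorm (f : X -> R) : \bar R :=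
  ereal_sup [set (`|f z|)%:E | z in [set: X]].

(** S_rho phi (x) for rho uniform on {g_1,...,g_m} *)
Definition S_unif {G : Type} (act : G -> X -> X) m (g : 'I_m -> G)
  (phi : X -> R) (x : X) : R :=
  (m%:R)^-1 * \sum_(i < m) phi (act (g i) x).

End defs.

(* Main.v *)
Require Import Defs.
From HB Require Import structures.
From mathcomp Require Import all_boot all_order all_algebra.
From mathcomp Require Import all_classical all_reals all_analysis.
From mathcomp Require Import measurable_realfun.
Import Order.TTheory GRing.Theory Num.Theory.
Local Open Scope classical_set_scope.
Local Open Scope ring_scope.

Lemma data_meas (d : measure_display) (R : realType) (X : measurableType d)
  (n : nat) (f : X -> R) : measurable_fun setT f ->
  measurable_fun setT (fun p : n.-tuple X * n.-tuple R => data f p.1 p.2).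
Proof.
move=> mf; apply/measurable_fun_tnthP => j.
have -> : (tnth (T:=X * R))^~ j \o (fun p : n.-tuple X * n.-tuple R => data f p.1 p.2)
  = (fun p => (tnth p.1 j, f (tnth p.1 j) + tnth p.2 j)).
  by apply/funext => p /=; rewrite /data tnth_map tnth_ord_tuple.
have m1 : measurable_fun setT (fun p : n.-tuple X * n.-tuple R => tnth p.1 j).
  exact: (measurableT_comp (measurable_tnth j) measurable_fst).
have m2 : measurable_fun setT (fun p : n.-tuple X * n.-tuple R => tnth p.2 j).
  exact: (measurableT_comp (measurable_tnth j) measurable_snd).
apply: measurable_fun_pair => //.
apply: measurable_funD => //.
exact: measurableT_comp mf m1.
Qed.

Lemma fubF_meas (d1 d2 : measure_display) (T1 : measurableType d1)
  (T2 : measurableType d2) (R : realType) (P : probability T2 R)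
  (Phi : T1 * T2 -> R) : measurable_fun setT Phi ->
  measurable_fun setT (fun x => (\int[P]_y (Phi (x, y))%:E)%E).
Proof.
move=> mPhi.
have mE : measurable_fun setT (EFin \o Phi) by apply/measurable_EFinP.
have -> : (fun x => (\int[P]_y (Phi (x, y))%:E)%E) =
  (fubini_F P (EFin \o Phi)^\+ \- fubini_F P (EFin \o Phi)^\-)%E.
  apply/funext => x; rewrite [LHS]integralE /fubini_F /=.
  by congr (_ - _)%E; apply: eq_integral => y _; rewrite ?funeposE ?funenegE.
apply: emeasurable_funB => //.
- apply: (@measurable_fun_fubini_tonelli_F _ _ _ _ _ P) => //.
  exact: measurable_funepos.
- apply: (@measurable_fun_fubini_tonelli_F _ _ _ _ _ P) => //.
  exact: measurable_funeneg.
Qed.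
Theorem lemma2 (d : measure_display) (R : realType) (X : measurableType d)
  (dist : X -> X -> R) (mu : probability X R) (nu : probability R R)
  (n : nat) (Px : probability (n.-tuple X) R) (Pe : probability (n.-tuple R) R)
  (f : X -> R) (h B beta : R)
  (est : n.-tuple (X * R)%type -> X -> R)
  (G : Type) (act : G -> X -> X) (x : X) (m : nat) (g : 'I_m -> G) :
  (forall y r, measurable (ball_d dist y r)) ->
  iid_law Px mu -> iid_law Pe nu ->
  (\int[nu]_e e%:E = 0)%E -> nu.-integrable setT (fun e : R => (e ^+ 2)%:E) ->
  measurable_fun setT f ->
  (forall y, measurable_fun setT (fun D => est D y)) ->
  0 < h -> 0 < B -> 0 < beta -> (0 < m)%N ->
  (forall xs es y, (forall i, ~ ball_d dist y h (tnth xs i)) ->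
     est (data f xs es) y = 0) ->
  (forall xs y, (exists i, ball_d dist y h (tnth xs i)) ->
     (`| condE Pe f (fun D => est D y) xs - (f y)%:E | <= (B * h `^ beta)%:E)%E) ->
  (`| fullE Px Pe f (fun D => S_unif act g (est D) x) - (S_unif act g f x)%:E |
     <= (B * h `^ beta)%:E
        + (\big[Order.max/0]_(i < m)
             expR (- (n%:R * fine (mu (ball_d dist (act (g i) x) h)))))%:E
          * supnorm f)%E.
Proof.
move=> mball iidx iide _ _ mf mest hpos Bpos betapos m0 E2 E3.
set Y := fun i => act (g i) x.
set K := B * h `^ beta.
have K0 : 0 < K by rewrite /K mulr_gt0 // powR_gt0.
pose Phi i := fun p : (n.-tuple X * n.-tuple R) => est (data f p.1 p.2) (Y i).
have mPhi : forall i, measurable_fun setT (Phi i).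
  move=> i; exact: measurableT_comp (mest (Y i)) (data_meas _ _ _ n _ mf).
pose c i xs := condE Pe f (fun D => est D (Y i)) xs.
pose E i := [set t : n.-tuple X | forall j, ~ ball_d dist (Y i) h (tnth t j)].
have mE : forall i, measurable (E i).
  move=> i.
  have -> : E i = \bigcap_(j in [set: 'I_n]) ((fun t : n.-tuple X => tnth t j) @^-1` (~` ball_d dist (Y i) h)).
    by apply/seteqP; split => t /=; [move=> H j _; exact: H | move=> H j; exact: H j I].
  apply: fin_bigcap_measurable; first exact: finite_finset.
  move=> j _; rewrite -[X in measurable X]setTI; apply: measurable_tnth => //.
  exact: measurableC.
have c0 : forall i xs, ~ (exists j, ball_d dist (Y i) h (tnth xs j)) -> c i xs = 0%E.
  move=> i xs nex; rewrite /c /condE.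
  have -> : (\int[Pe]_es (est (data f xs es) (Y i))%:E = \int[Pe]_es (cst 0%R es))%E.
    apply: eq_integral => es _; rewrite E2 //.
    by move=> j bj; apply: nex; exists j.
  by rewrite integral0.
have cfin : forall i xs, c i xs \is a fin_num.
  move=> i xs; case: (pselect (exists j, ball_d dist (Y i) h (tnth xs j))) => [ex|nex].
    have := E3 xs (Y i) ex; rewrite -/(c i xs).
    by case: (c i xs).
  by rewrite c0.
pose r i xs := fine (c i xs).
have crE : forall i xs, c i xs = (r i xs)%:E by move=> i xs; rewrite /r fineK.
have bound : forall i xs, `|r i xs - f (Y i)| <= K + \1_(E i) xs * `|f (Y i)|.
  move=> i xs; case: (pselect (exists j, ball_d dist (Y i) h (tnth xs j))) => [ex|nex].
    have := E3 xs (Y i) ex; rewrite -/(c i xs) crE -EFinB /= lee_fin => H.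
    apply: (le_trans H); rewrite lerDl; apply: mulr_ge0 => //.
  have -> : r i xs = 0 by rewrite /r c0.
  have -> : \1_(E i) xs = 1 :> R.
    rewrite indicE mem_set //; move=> j bj; apply: nex; by exists j.
  by rewrite sub0r normrN mul1r lerDr ltW.
have mr : forall i, measurable_fun setT (r i).
  move=> i; apply: measurableT_comp (fine_measurable _) _ => //.
  exact: (fubF_meas _ _ _ _ _ Pe _ (mPhi i)).
pose T xs := m%:R^-1 * \sum_(i < m) r i xs.
have inner : forall xs, condE Pe f (fun D => S_unif act g (est D) x) xs = (T xs)%:E.
  move=> xs.
  have intg : forall i, Pe.-integrable setT (fun es => (est (data f xs es) (Y i))%:E).
    move=> i; apply/integrableP; split.
      by apply/measurable_EFinP; exact: (measurable_fun_pair2 xs (mPhi i)).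
    rewrite integral_fin_num_abs //; first exact: cfin i xs.
    exact: (measurable_fun_pair2 xs (mPhi i)).
  have intg' : forall i, Pe.-integrable setT
      (fun es => (m%:R^-1 * est (data f xs es) (Y i))%:E).
    by move=> i; exact: (integrableZl measurableT m%:R^-1 (intg i)).
  rewrite /condE /S_unif /T.
  under eq_integral do rewrite mulr_sumr -sumEFin.
  rewrite integral_sum //.
  rewrite mulr_sumr -sumEFin; apply: eq_bigr => i _.
  rewrite EFinM -crE /c /condE -integralZl //.
rewrite /fullE.
under eq_integral do rewrite inner.
set Sf := S_unif act g f x.
pose psi xs := K + m%:R^-1 * \sum_(i < m) \1_(E i) xs * `|f (Y i)|.
have m0R : (m%:R : R) != 0 by rewrite pnatr_eq0 -lt0n.
have minv0 : 0 <= (m%:R : R)^-1 by rewrite invr_ge0 ler0n.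
have Tb : forall xs, `|T xs - Sf| <= psi xs.
  move=> xs; rewrite /T /Sf /S_unif /psi -mulrBr -sumrB normrM (ger0_norm minv0).
  have H : `|\sum_(i < m) (r i xs - f (Y i))| <=
      K *+ m + \sum_(i < m) \1_(E i) xs * `|f (Y i)|.
    apply: (le_trans (ler_norm_sum _ _ _)).
    have -> : K *+ m = \sum_(i < m) K by rewrite sumr_const card_ord.
    rewrite -big_split /=.
    by apply: ler_sum => i _; exact: bound.
  apply: (le_trans (ler_wpM2l minv0 H)).
  by rewrite mulrDr -[K *+ m]mulr_natl mulrA mulVf // mul1r.
have mT : measurable_fun setT T.
  apply: measurable_funM; first exact: measurable_cst.
  by apply: measurable_sum => i; exact: mr.
have mpsi : measurable_fun setT psi.
  apply: measurable_funD => //; apply: measurable_funM => //.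
  apply: measurable_sum => i; apply: measurable_funM => //; exact: measurable_indic.
pose a i := fine (Px (E i)).
have PxE : forall i, Px (E i) = (a i)%:E by move=> i; rewrite /a fineK // fin_num_measure.
have intind : forall i, Px.-integrable setT
    (fun xs => ((m%:R^-1 * `|f (Y i)|) * \1_(E i) xs)%:E).
  move=> i; exact: (integrableZl measurableT _ (integrable_indic Px (mE i))).
have ipsi : (\int[Px]_xs (psi xs)%:E =
    (K + m%:R^-1 * \sum_(i < m) a i * `|f (Y i)|)%:E)%E.
  have -> : (fun xs => (psi xs)%:E) = (fun xs => K%:E +
      \sum_(i < m) ((m%:R^-1 * `|f (Y i)|) * \1_(E i) xs)%:E)%E.
    apply/funext => xs; rewrite /psi sumEFin -EFinD mulr_sumr.
    by congr (_ + _)%:E; apply: eq_bigr => i _; rewrite mulrA mulrAC.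
  rewrite integralD //; last first.
    by apply: (integrable_sum measurableT) => i _; exact: intind.
    exact: finite_measure_integrable_cst.
  rewrite integral_cst //; set u := (X in (K%:E * X)%E); have -> : u = 1%E by exact: probability_setT.
  rewrite mule1 integral_sum //.
  rewrite EFinD mulr_sumr -sumEFin; congr (_ + _)%E; apply: eq_bigr => i _.
  transitivity ((m%:R^-1 * `|f (Y i)|)%:E * \int[Px]_xs (\1_(E i) xs)%:E)%E.
    exact: (integralZl measurableT (integrable_indic Px (mE i))).
  rewrite integral_indic // setIT; set u2 := (X in (_%:E * X)%E); have -> : u2 = (a i)%:E by exact: PxE.
  rewrite -EFinM; congr _%:E.
  by rewrite mulrAC -mulrA.
have mTS : measurable_fun setT (fun xs => (T xs - Sf)%:E).
  by apply/measurable_EFinP; apply: measurable_funB.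
have absle : (\int[Px]_xs `|(T xs - Sf)%:E| <= \int[Px]_xs (psi xs)%:E)%E.
  apply: ge0_le_integral => //.
  - exact: (measurableT_comp (@abse_measurable R setT) mTS).
  - by apply/measurable_EFinP.
  - by move=> xs _; rewrite /= lee_fin; exact: Tb.
have iT : Px.-integrable setT (fun xs => (T xs - Sf)%:E).
  apply/integrableP; split => //.
  by apply: (le_lt_trans absle); rewrite ipsi ltry.
have -> : (\int[Px]_xs (T xs)%:E = \int[Px]_xs ((T xs - Sf)%:E + Sf%:E))%E.
  by apply: eq_integral => xs _; rewrite -EFinD subrK.
rewrite integralD //; last exact: finite_measure_integrable_cst.
rewrite integral_cst //; set u := (X in (Sf%:E * X)%E).
have -> : u = 1%E by exact: probability_setT.
rewrite mule1 addeK //.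
apply: (le_trans (le_abse_integral _ _ _)) => //.
apply: (le_trans absle); rewrite ipsi EFinD; apply: leeD2l.
set M := \big[Order.max/0]_(i < m) _.
have aM : forall i, a i <= M.
  move=> i; apply: (le_trans _ (le_bigmax _ _ i)).
  set p := fine (mu (ball_d dist (act (g i) x) h)).
  have mup : mu (ball_d dist (act (g i) x) h) = p%:E by rewrite /p fineK // fin_num_measure.
  have p1 : p <= 1 by rewrite -lee_fin -mup probability_le1.
  have -> : a i = (1 - p) ^+ n.
    have HP : Px (E i) = (\prod_(j < n) mu (~` ball_d dist (Y i) h))%E :=
      iidx (fun _ => ~` ball_d dist (Y i) h) (fun _ => measurableC (mball _ _)).
    rewrite /a HP (eq_bigr (fun _ => (1 - p)%:E)); last first.
      by move=> j _; rewrite probability_setC // mup.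
    by rewrite prodEFin prodr_const card_ord.
  rewrite -mulrN expRM_natl; apply: lerXn2r; rewrite ?nnegrE ?subr_ge0 ?expR_ge0 //.
  exact: expR_ge1Dx.
have M0 : 0 < M.
  exact: (lt_le_trans (expR_gt0 _) (le_bigmax _ _ (Ordinal m0))).
have a0 : forall i, 0 <= a i by move=> i; rewrite /a fine_ge0.
have sup_ge : forall z, ((`|f z|)%:E <= supnorm f)%E.
  by move=> z; apply: ereal_sup_ubound; exists z.
case Es : (supnorm f) => [s| |].
- rewrite -EFinM lee_fin.
  have fs : forall z, `|f z| <= s by move=> z; rewrite -lee_fin -Es sup_ge.
  apply: (@le_trans _ _ (m%:R^-1 * \sum_(i < m) M * s)).
    apply: (ler_wpM2l minv0); apply: ler_sum => i _; apply: ler_pM => //.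
  by rewrite sumr_const card_ord -[X in _ * X]mulr_natl !mulrA mulVf // mul1r.
- by rewrite gt0_muley ?lte_fin // leey.
- by have := sup_ge x; rewrite Es.
Qed.
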